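(* Let $f$ be a complex polynomial of degree $d$ with $f(0)\neq0$, with roots $\zeta_1,\dots,\zeta_d$ (with multiplicity) ordered so that $|\zeta_1|\le\cdots\le|\zeta_d|$, not all of the same modulus. Let $\rho=\min\{|\zeta_{i+1}|/|\zeta_i|:|\zeta_{i+1}|>|\zeta_i|\}$, $I=\{i:1\le i\le d-1,\ |\zeta_i|<|\zeta_{i+1}|\}\cup\{0,d\}$, $N\ge 0$, $R=\rho^{2^N}$, $g=G^Nf=\sum_i g_ix^i$, $r_i=-2^{-N}\log|g_i|$, and for $0\le a<b\le d$ put $S(a,b)=\frac{r_b-r_a}{b-a}$. Assume: (a) $m\ge i_2-i_1$ for all successive elements $i_1<i_2$ of $I$; (b) $2^{-N+1}\log(2^m+2^dR^{-1})-2^{-N+2}\log(1-2^dR^{-1})<E<\frac{\log\rho}{2}$; (c) $0\le i<j<k\le d$. Then: 1. If $i$ and $j$ are successive elements of $I$ and no element of $I$ lies strictly between $j$ and $k$, then $S(i,j)<S(j,k)-E$. 2. If $i$ and $k$ are successive elements of $I$, then $S(i,j)>S(j,k)-E$.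
   Context: $\log$ is the natural logarithm. The Graeffe operator maps a degree $d$ polynomial $f$ to $Gf(x)=(-1)^d f(\sqrt{x})f(-\sqrt{x})$, again of degree $d$; $G^N$ is its $N$-th iterate. Two elements $i_1<i_2$ of $I$ are successive if no element of $I$ lies strictly between them. Hypothesis (b) implicitly requires $2^dR^{-1}<1$. *)

(* Defs.v *)
From HB Require Import structures.
From mathcomp Require Import all_boot all_order all_algebra.
From mathcomp Require Import all_classical all_reals all_analysis.
From mathcomp Require Import complex.
Set Implicit Arguments. Unset Strict Implicit. Unset Printing Implicit Defensive.
Import Order.TTheory GRing.Theory Num.Theory.
Local Open Scope ring_scope.

Definition cmod {R : rcfType} (z : R[i]) : R := ComplexField.Normc.normc z.

(* Graeffe operator: Gf(x) = (-1)^d f(sqrt x) f(-sqrt x), with d = deg f.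
   Writing f(x) = fe(x^2) + x fo(x^2), we get
   f(sqrt x) f(-sqrt x) = fe(x)^2 - x fo(x)^2. *)
Definition graeffe {F : comNzRingType} (f : {poly F}) : {poly F} :=
  let fe := \poly_(i < size f) f`_(2 * i) in
  let fo := \poly_(i < size f) f`_(2 * i + 1) in
  (-1) ^+ (size f).-1 *: (fe ^+ 2 - 'X * fo ^+ 2).

Definition rcoef {R : realType} (N : nat) (g : {poly R[i]}) (i : nat) : \bar R :=
  if g`_i == 0 then +oo%E
  else (- (2 ^- N) * ln (cmod g`_i))%:E.

Definition slopeS {R : realType} (r : nat -> \bar R) (a b : nat) : \bar R :=
  ((r b - r a) * ((b - a)%:R^-1 : R)%:E)%E.

(* membership in I = {i : 1 <= i <= d-1, |z_i| < |z_{i+1}|} u {0, d};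
   roots are indexed z_1, ..., z_d *)
Definition inI {R : realType} (d : nat) (z : nat -> R[i]) (i : nat) : bool :=
  [|| i == 0%N, i == d | [&& (1 <= i)%N, (i <= d.-1)%N & cmod (z i) < cmod (z i.+1)]].

Definition successive {R : realType} (d : nat) (z : nat -> R[i]) (i1 i2 : nat) : Prop :=
  [/\ inI d z i1, inI d z i2, (i1 < i2)%N &
      forall l, (i1 < l < i2)%N -> ~~ inI d z l].

(* Main.v *)
Require Import Defs.
From HB Require Import structures.
From mathcomp Require Import all_boot all_order all_algebra.
From mathcomp Require Import all_classical all_reals all_analysis.
From mathcomp Require Import complex.
From mathcomp Require Import zify ring lra.
Set Implicit Arguments. Unset Strict Implicit. Unset Printing Implicit Defensive.
Import Order.TTheory GRing.Theory Num.Theory.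
Local Open Scope ring_scope.

Arguments cmod : simpl never.
Section CM.
Variable R : rcfType.
Local Open Scope complex_scope.
Local Open Scope ring_scope.
Implicit Types x y : R[i].

Lemma cmodE x : `|x| = (cmod x)%:C.
Proof. by case: x => a b; rewrite normc_def. Qed.

Lemma cmodM x y : cmod (x * y) = cmod x * cmod y.
Proof. exact: ComplexField.Normc.normcM. Qed.

Lemma cmod_ge0 x : 0 <= cmod x.
Proof. by case: x => a b; rewrite /cmod /=; apply: sqrtr_ge0. Qed.

Lemma cmod_eq0 x : (cmod x == 0) = (x == 0).
Proof.
apply/eqP/eqP; first exact: ComplexField.Normc.eq0_normc.
by move=> ->; exact: ComplexField.Normc.normc0.
Qed.

Lemma cmod_gt0 x : (0 < cmod x) = (x != 0).
Proof. by rewrite lt_def cmod_ge0 cmod_eq0 andbT. Qed.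

Lemma cmod0 : cmod (0 : R[i]) = 0.
Proof. exact: ComplexField.Normc.normc0. Qed.

Lemma cmod1 : cmod (1 : R[i]) = 1.
Proof. exact: ComplexField.Normc.normc1. Qed.

Lemma cmodD x y : cmod (x + y) <= cmod x + cmod y.
Proof. exact: le_normcD. Qed.

Lemma cmodN x : cmod (- x) = cmod x.
Proof. exact: normcN. Qed.

Lemma cmodB x y : cmod (x - y) <= cmod x + cmod y.
Proof. by rewrite -(cmodN y); apply: cmodD. Qed.

Lemma cmodBr x y : cmod x - cmod y <= cmod (x + y).
Proof.
have := cmodD (x + y) (- y); rewrite addrK cmodN => h.
by rewrite lerBlDr.
Qed.

Lemma cmodX x n : cmod (x ^+ n) = cmod x ^+ n.
Proof. by elim: n => [|n IH]; rewrite ?expr0 ?cmod1 // !exprS cmodM IH. Qed.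

Lemma cmod_prod (I : Type) (s : seq I) (P : pred I) (F : I -> R[i]) :
  cmod (\prod_(l <- s | P l) F l) = \prod_(l <- s | P l) cmod (F l).
Proof. by apply: (big_morph _ cmodM cmod1). Qed.

End CM.


Lemma bin_le2 n t : ('C(n, t) <= 2 ^ n)%N.
Proof.
elim: n t => [|n IH] [|t] //; first by rewrite bin0 expn_gt0.
by rewrite binS expnS mul2n -addnn leq_add.
Qed.

Lemma bin_lt2 n t : (0 < n)%N -> ('C(n, t) <= (2 ^ n).-1)%N.
Proof.
case: n => // n _; elim: n t => [|n IH] [|t] //.
  by case: t.
  by rewrite bin0 -ltnS prednK ?expn_gt0 // (ltn_exp2l 0).
rewrite binS; have h1 := IH t.+1; have h2 := IH t.
have e : (2 ^ n.+2 = 2 ^ n.+1 + 2 ^ n.+1)%N by rewrite expnS mul2n addnn.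
have p : (0 < 2 ^ n.+1)%N by rewrite expn_gt0.
rewrite e; lia.
Qed.

Section CB.
Variable R : rcfType.
Implicit Types p q : {poly R[i]}.

Lemma cmod_sum (I : Type) (r : seq I) (P : pred I) (F : I -> R[i]) :
  cmod (\sum_(i <- r | P i) F i) <= \sum_(i <- r | P i) cmod (F i).
Proof.
elim: r => [|x r IH]; first by rewrite !big_nil cmod0.
rewrite !big_cons; case: (P x) => //.
by apply: le_trans (cmodD _ _) _; rewrite lerD2l.
Qed.

Lemma conv_upper p q t (k0 : 'I_t.+1) :
  cmod ((p * q)`_t) <= cmod (p`_k0) * cmod (q`_(t - k0)) +
     \sum_(k < t.+1 | k != k0) cmod (p`_k) * cmod (q`_(t - k)).
Proof.
rewrite coefM (bigD1 k0) //=; apply: le_trans (cmodD _ _) _.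
rewrite cmodM lerD2l; apply: le_trans (cmod_sum _ _ _) _.
by apply: ler_sum => k _; rewrite cmodM.
Qed.

Lemma conv_lower p q t (k0 : 'I_t.+1) :
  cmod (p`_k0) * cmod (q`_(t - k0)) -
     \sum_(k < t.+1 | k != k0) cmod (p`_k) * cmod (q`_(t - k)) <= cmod ((p * q)`_t).
Proof.
rewrite coefM [in X in _ <= X](bigD1 k0) //=; apply: le_trans _ (cmodBr _ _).
rewrite cmodM lerD2l lerN2; apply: le_trans (cmod_sum _ _ _) _.
by apply: ler_sum => k _; rewrite cmodM.
Qed.

Variable w : nat -> R[i].
Notation PX a b := (\prod_(a <= l < b) ('X - (w l)%:P)).

Lemma PX_split a b e : (a <= b)%N -> (b <= e)%N -> PX a e = PX a b * PX b e.
Proof. by move=> ab be; rewrite -big_cat_nat. Qed.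

Lemma PX_recr a n : PX a (a + n.+1) = PX a (a + n) * ('X - (w (a + n))%:P).
Proof. by rewrite addnS big_nat_recr //= leq_addr. Qed.

Lemma coefMXsubC p c t :
  (p * ('X - c%:P))`_t = (if t == 0%N then 0 else p`_t.-1) - p`_t * c.
Proof. by rewrite mulrBr coefB coefMX coefMC. Qed.

Lemma PX_coef0 a b : cmod ((PX a b)`_0) = \prod_(a <= l < b) cmod (w l).
Proof.
rewrite coef0_prod cmod_prod; apply: eq_bigr => l _.
by rewrite coefB coefX coefC /= sub0r cmodN.
Qed.

Lemma PX_lo a n M : 0 <= M -> (forall l, (a <= l < a + n)%N -> cmod (w l) <= M) ->
  forall t, cmod ((PX a (a + n))`_t) <= ('C(n, t))%:R * M ^+ (n - t).
Proof.
move=> M0; elim: n => [|n IH] hw t.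
  rewrite addn0 big_geq // coefC; case: t => [|t] /=.
    by rewrite cmod1 bin0 mul1r expr0.
  by rewrite cmod0 bin0n mul0r.
have IH' := IH (fun l hl => hw l (ltac:(move/andP: hl => [h1 h2]; apply/andP; split => //; lia))).
have hc : cmod (w (a + n)) <= M by apply: hw; apply/andP; split; lia.
rewrite PX_recr coefMXsubC; apply: le_trans (cmodB _ _) _.
rewrite cmodM; case: t => [|t] /=.
  rewrite cmod0 add0r !bin0 !mul1r subn0 exprS mulrC ler_pM ?cmod_ge0 //.
  by have := IH' 0%N; rewrite bin0 mul1r subn0.
rewrite binS natrD mulrDl subSS [X in _ <= X]addrC; apply: lerD; first exact: IH'.
case: (ltnP n t.+1) => hnt.
  by rewrite bin_small // mul0r; have := IH' t.+1; rewrite bin_small // mul0r => h;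
     rewrite (le_trans (ler_pM _ _ h hc)) ?mul0r ?cmod_ge0.
have -> : (n - t = (n - t.+1).+1)%N by lia.
rewrite exprS [M * _]mulrC mulrA; apply: ler_pM; rewrite ?cmod_ge0 //.
Qed.

Lemma PX_hi a n V : 0 <= V -> (forall l, (a <= l < a + n)%N -> V <= cmod (w l)) ->
  forall t, cmod ((PX a (a + n))`_t) * V ^+ t <= ('C(n, t))%:R * cmod ((PX a (a + n))`_0).
Proof.
move=> V0; elim: n => [|n IH] hw t.
  rewrite addn0 big_geq // !coefC; case: t => [|t] /=.
    by rewrite bin0 mul1r expr0 mulr1.
  by rewrite cmod0 bin0n !mul0r.
have IH' := IH (fun l hl => hw l (ltac:(move/andP: hl => [h1 h2]; apply/andP; split => //; lia))).
have hc : V <= cmod (w (a + n)) by apply: hw; apply/andP; split; lia.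
rewrite PX_recr !coefMXsubC /= sub0r cmodN cmodM.
case: t => [|t] /=.
  by rewrite sub0r cmodN cmodM bin0 expr0 mulr1 mul1r.
apply: le_trans (ler_wpM2r (exprn_ge0 _ V0) (cmodB _ _)) _.
rewrite cmodM binS natrD.
set Q0 := cmod ((PX a (a + n))`_0).
have hQ0 : 0 <= Q0 by apply: cmod_ge0.
have h1 := IH' t; have h2 := IH' t.+1.
move: h1 h2; rewrite exprS.
set x := cmod _`_t; set y := cmod _`_t.+1; set c := cmod (w _); set v := V ^+ t.
set A := 'C(n, t)%:R; set B := 'C(n, t.+1)%:R.
have x0 : 0 <= x by apply: cmod_ge0.
have y0 : 0 <= y by apply: cmod_ge0.
have v0 : 0 <= v by apply: exprn_ge0.
have A0 : 0 <= A by apply: ler0n.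
have B0 : 0 <= B by apply: ler0n.
move=> h1 h2.
have e1 : V * (x * v) <= V * (A * Q0) by apply: ler_wpM2l.
have e2 : c * (y * (V * v)) <= c * (B * Q0) by apply: ler_wpM2l => //; apply: le_trans hc.
have e3 : V * (A * Q0) <= c * (A * Q0) by apply: ler_wpM2r => //; apply: mulr_ge0.
have -> : (x + y * c) * (V * v) = V * (x * v) + c * (y * (V * v)) by ring.
have -> : (B + A) * (Q0 * c) = c * (A * Q0) + c * (B * Q0) by ring.
apply: lerD => //; exact: le_trans e1 e3.
Qed.

End CB.


Section Sums.
Variable R : rcfType.

Lemma binsum_bound n1 n2 t (P : pred 'I_t.+1) (T : 'I_t.+1 -> R) (Y : R) :
  0 <= Y -> (forall k : 'I_t.+1, P k -> T k <= ('C(n1, k) * 'C(n2, t - k))%:R * Y) ->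
  \sum_(k < t.+1 | P k) T k <= (2 ^ (n1 + n2))%:R * Y.
Proof.
move=> Y0 hT; apply: le_trans (ler_sum _ hT) _.
rewrite -mulr_suml; apply: ler_wpM2r => //.
apply: le_trans (_ : \sum_(k < t.+1) ('C(n1, k) * 'C(n2, t - k))%:R <= _).
  rewrite [X in _ <= X](bigID P) /= lerDl; apply: sumr_ge0 => k _; apply: ler0n.
rewrite -natr_sum binomial.Vandermonde ler_nat; exact: bin_le2.
Qed.

End Sums.

Section Levels.
Variable R : rcfType.
Variable w : nat -> R[i].
Notation PX a b := (\prod_(a <= l < b) ('X - (w l)%:P)).

Lemma PX_lead a n : (PX a (a + n))`_n = 1.
Proof.
have := lead_coef_prod_XsubC (index_iota a (a + n)) xpredT w.
rewrite lead_coefE size_prod_XsubC size_iota addKn /=.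
by [].
Qed.

Variables (a n1 n2 : nat) (M V K : R).
Hypothesis M0 : 0 <= M.
Hypothesis V0 : 0 < V.
Hypothesis K1 : 1 <= K.
Hypothesis MKV : M * K <= V.
Hypothesis hp : forall l, (a <= l < a + n1)%N -> cmod (w l) <= M.
Hypothesis hq : forall l, (a + n1 <= l < a + n1 + n2)%N -> V <= cmod (w l).

Let p := PX a (a + n1).
Let q := PX (a + n1) (a + n1 + n2).
Let Q0 := cmod (q`_0).

Lemma Q0_ge0 : 0 <= Q0. Proof. exact: cmod_ge0. Qed.

Lemma p_bound k : cmod (p`_k) <= ('C(n1, k))%:R * M ^+ (n1 - k).
Proof. exact: PX_lo. Qed.

Lemma q_bound j : cmod (q`_j) <= ('C(n2, j))%:R * Q0 / V ^+ j.
Proof.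
have := PX_hi (ltW V0) hq j; rewrite -/q -/Q0 => h.
by rewrite ler_pdivlMr ?exprn_gt0.
Qed.

Lemma term_bound t k : (k <= t)%N ->
  cmod (p`_k) * cmod (q`_(t - k)) <=
  ('C(n1, k) * 'C(n2, t - k))%:R * (M ^+ (n1 - k) * Q0 / V ^+ (t - k)).
Proof.
move=> kt; apply: le_trans (ler_pM (cmod_ge0 _) (cmod_ge0 _) (p_bound k) (q_bound (t - k))) _.
rewrite natrM le_eqVlt; apply/orP; left; apply/eqP.
rewrite !mulrA; congr (_ * _); rewrite -!mulrA; congr (_ * _); rewrite mulrC -!mulrA; congr (_ * _).
by rewrite mulrC.
Qed.

Lemma K0 : 0 < K. Proof. exact: lt_le_trans K1. Qed.

Lemma powMK j : (0 < j)%N -> M ^+ j * K <= V ^+ j.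
Proof.
move=> j0.
have h1 : K <= K ^+ j.
  case: j j0 => // j _; rewrite exprS -[X in X <= _]mulr1 ler_wpM2l ?(ltW K0) //.
  exact: exprn_ege1.
apply: le_trans (_ : M ^+ j * K ^+ j <= _).
  by apply: ler_wpM2l => //; apply: exprn_ge0.
rewrite -exprMn; apply: lerXn2r => //; rewrite qualifE /=.
  by apply: mulr_ge0 => //; apply: ltW K0.
exact: ltW.
Qed.

Lemma err1 t (k0 : 'I_t.+1) : nat_of_ord k0 = n1 ->
  \sum_(k < t.+1 | k != k0) cmod (p`_k) * cmod (q`_(t - k)) <=
  (2 ^ (n1 + n2))%:R * (Q0 / (K * V ^+ (t - n1))).
Proof.
move=> hk0; apply: binsum_bound.
  apply: divr_ge0; first exact: Q0_ge0.
  by apply: mulr_ge0; [apply: ltW K0 | apply: exprn_ge0; apply: ltW].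
move=> k hk; apply: le_trans (term_bound (ltn_ord k : (k <= t)%N)) _.
case: (ltnP n1 k) => hk1.
  by rewrite bin_small // !mul0n !mul0r.
have kn : (k < n1)%N.
  by rewrite ltn_neqAle hk1 andbT -hk0; apply: contra hk => /eqP h; apply/eqP/val_inj.
have t1 : (n1 <= t)%N by rewrite -hk0 -ltnS.
apply: ler_wpM2l; first exact: ler0n.
have Vp : 0 < V ^+ (t - n1) by apply: exprn_gt0.
have Vk : 0 < V ^+ (t - k) by apply: exprn_gt0.
rewrite ler_pdivlMr ?mulr_gt0 ?K0 //.
rewrite mulrAC ler_pdivrMr // [M ^+ _ * Q0]mulrC -mulrA.
apply: ler_wpM2l; first exact: Q0_ge0.
have -> : (t - k = (n1 - k) + (t - n1))%N by lia.
rewrite exprD mulrA.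
apply: ler_wpM2r; first exact: ltW.
apply: powMK; lia.
Qed.

Lemma err2 t (k0 : 'I_t.+1) : nat_of_ord k0 = t -> (t <= n1)%N ->
  \sum_(k < t.+1 | k != k0) cmod (p`_k) * cmod (q`_(t - k)) <=
  (2 ^ (n1 + n2))%:R * (M ^+ (n1 - t) * Q0 / K).
Proof.
move=> hk0 tn; apply: binsum_bound.
  apply: divr_ge0; last exact: ltW K0.
  by apply: mulr_ge0; [apply: exprn_ge0 | apply: Q0_ge0].
move=> k hk; apply: le_trans (term_bound (ltn_ord k : (k <= t)%N)) _.
have kt : (k < t)%N.
  have := ltn_ord k; rewrite ltnS leq_eqVlt => /orP[/eqP h|//].
  by move: hk; rewrite (_ : k = k0) ?eqxx //; apply: val_inj; rewrite /= hk0.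
apply: ler_wpM2l; first exact: ler0n.
have Vk : 0 < V ^+ (t - k) by apply: exprn_gt0.
rewrite ler_pdivrMr // [X in _ <= X]mulrAC ler_pdivlMr ?K0 //.
rewrite mulrAC [X in _ <= X]mulrAC; apply: ler_wpM2r; first exact: Q0_ge0.
have -> : (n1 - k = (n1 - t) + (t - k))%N by lia.
rewrite exprD -mulrA; apply: ler_wpM2l; first exact: exprn_ge0.
apply: powMK; lia.
Qed.

Lemma levelA : (1 - (2 ^ (n1 + n2))%:R / K) * Q0 <= cmod ((p * q)`_n1).
Proof.
have := conv_lower p q (Ordinal (ltnSn n1)); rewrite /= subnn.
have := @err1 _ (Ordinal (ltnSn n1)) erefl; rewrite subnn expr0 mulr1.
rewrite /p PX_lead cmod1 mul1r -/p -/Q0 => h1 h2.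
apply: le_trans h2; rewrite mulrBl mul1r lerB //.
by apply: le_trans h1 _; rewrite [X in _ <= X]mulrAC -mulrA.
Qed.

Lemma levelB1 t : (n1 <= t)%N ->
  cmod ((p * q)`_t) <= cmod (q`_(t - n1)) + (2 ^ (n1 + n2))%:R * (Q0 / (K * V ^+ (t - n1))).
Proof.
move=> tn; have k0lt : (n1 < t.+1)%N by rewrite ltnS.
have := conv_upper p q (Ordinal k0lt); rewrite /=.
have := @err1 _ (Ordinal k0lt) erefl.
rewrite /p PX_lead cmod1 mul1r -/p => h1 h2.
apply: le_trans h2 _; rewrite lerD2l; exact: h1.
Qed.

Lemma levelB2 t : (t <= n1)%N ->
  cmod ((p * q)`_t) <= ('C(n1, t))%:R * M ^+ (n1 - t) * Q0 + (2 ^ (n1 + n2))%:R * (M ^+ (n1 - t) * Q0 / K).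
Proof.
move=> tn.
have := conv_upper p q (Ordinal (ltnSn t)); rewrite /= subnn -/Q0.
have := @err2 _ (Ordinal (ltnSn t)) erefl tn => h1 h2.
apply: le_trans h2 _; apply: lerD => //.
apply: ler_wpM2r; first exact: Q0_ge0.
exact: p_bound.
Qed.

End Levels.


Section Graeffe.
Variable F : fieldType.
Implicit Types p q f : {poly F}.

Lemma even_odd_split f :
  let fe := \poly_(i < size f) f`_(2 * i) in
  let fo := \poly_(i < size f) f`_(2 * i + 1) in
  f = fe \Po 'X^2 + 'X * (fo \Po 'X^2).
Proof.
move=> fe fo; apply/polyP => i.
rewrite coefD coefXM !coef_comp_poly_Xn // !coef_poly.
have [ev|od] := boolP (2 %| i)%N.
  case: i ev => [|i] ev.
    rewrite /= addr0 muln0; case: ifP => // h.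
    by rewrite nth_default //; move/negbT: h; rewrite -leqNgt.
  have nd : (2 %| i)%N = false by apply/negbTE/negP => h; lia.
  rewrite /= nd addr0; case: ifP => [_|h]; first by rewrite mulnC divnK.
  rewrite nth_default //; move/negbT: h; rewrite -leqNgt => h.
  have := divnK ev; lia.
have i0 : i != 0%N by apply: contraNneq od => ->.
rewrite (negbTE i0) /=.
have ev : (2 %| i.-1)%N by lia.
rewrite ev add0r; case: ifP => [_|h].
  by congr (_`_ _); have := divnK ev; lia.
rewrite nth_default //; move/negbT: h; rewrite -leqNgt => h.
have := divnK ev; lia.
Qed.

Lemma comp_inj_X2 p q : p \Po 'X^2 = q \Po 'X^2 -> p = q.
Proof.
move=> h; apply/eqP; rewrite -subr_eq0 -(comp_poly_eq0 _ (_ : 1 < size ('X^2 : {poly F}))%N).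
  by rewrite comp_polyB h subrr.
by rewrite size_polyXn.
Qed.

Lemma prod_pair (I : Type) (s : seq I) (a : I -> F) :
  \prod_(x <- s) ('X - (a x)%:P) * \prod_(x <- s) (('X - (a x)%:P) \Po - 'X) =
  ((-1) ^+ size s) *: \prod_(x <- s) (('X - (a x ^+ 2)%:P) \Po 'X^2).
Proof.
elim: s => [|x s IH]; first by rewrite !big_nil mulr1 expr0 scale1r.
rewrite !big_cons /=.
have e : \prod_(j <- s) ('X - (a j)%:P) * \prod_(j <- s) (('X - (a j)%:P) \Po - 'X) =
   ((-1) ^+ size s)%:P * \prod_(j <- s) (('X - (a j ^+ 2)%:P) \Po 'X^2) by rewrite IH mul_polyC.
rewrite -mul_polyC !comp_polyB !comp_polyX !comp_polyC rmorphXn exprS /=.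
move: e; set P1 := \prod_(j <- s) _; set P2 := \prod_(j <- s) _; set P3 := \prod_(j <- s) _.
set u := ((-1) ^+ size s)%:P => e.
rewrite polyCN polyC1.
transitivity (('X - (a x)%:P) * (- 'X - (a x)%:P) * (P1 * P2)); first by ring.
rewrite e /u !rmorphXn /= ?polyCN ?polyC1; ring.
Qed.

Lemma graeffe_prod (I : Type) (s : seq I) (a : I -> F) (c : F) : c != 0 ->
  graeffe (c *: \prod_(x <- s) ('X - (a x)%:P)) =
  (c ^+ 2) *: \prod_(x <- s) ('X - (a x ^+ 2)%:P).
Proof.
move=> c0; set P := \prod_(x <- s) _; set f := c *: P.
have sf : size f = (size s).+1 by rewrite size_scale // size_prod_XsubC.
rewrite /graeffe /=.
set fe := \poly_(i < size f) f`_(2 * i).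
set fo := \poly_(i < size f) f`_(2 * i + 1).
rewrite sf.
have hsplit := even_odd_split f; rewrite -/fe -/fo in hsplit.
have hneg : f \Po (- 'X) = fe \Po 'X^2 - 'X * (fo \Po 'X^2).
  rewrite {1}hsplit comp_polyD comp_polyM comp_polyX -!comp_polyA.
  by rewrite !rmorphXn /= comp_polyX sqrrN mulNr.
have hprod : f * (f \Po (- 'X)) = (fe ^+ 2 - 'X * fo ^+ 2) \Po 'X^2.
  rewrite hneg {1}hsplit comp_polyB !comp_polyM comp_polyX.
  ring.
have hf : f * (f \Po (- 'X)) = ((-1) ^+ size s * c ^+ 2) *: \prod_(x <- s) ('X - (a x ^+ 2)%:P) \Po 'X^2.
  rewrite /f comp_polyZ /P rmorph_prod /= -scalerAl -scalerAr scalerA -expr2.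
  by rewrite comp_polyZ rmorph_prod /= prod_pair scalerA mulrC.
have := hprod; rewrite hf => /comp_inj_X2 <-; rewrite /=.
by rewrite scalerA mulrA -exprD -signr_odd oddD addbb expr0 mul1r.
Qed.

End Graeffe.

Lemma iter_graeffe (F : fieldType) (I : Type) (s : seq I) (a : I -> F) (c : F) (N : nat) :
  c != 0 -> iter N graeffe (c *: \prod_(x <- s) ('X - (a x)%:P)) =
  (c ^+ (2 ^ N)) *: \prod_(x <- s) ('X - (a x ^+ (2 ^ N))%:P).
Proof.
move=> c0; elim: N => [|N IH].
  by rewrite /= expn0 expr1; under [in RHS]eq_bigr do rewrite expr1.
rewrite iterS IH graeffe_prod ?expf_neq0 // -exprM -expnSr.
by under eq_bigr do rewrite -exprM -expnSr.
Qed.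


Ltac nlia := repeat match goal with H : ?T |- _ =>
  lazymatch T with is_true (leq _ _) => fail | @eq ?A _ _ => tryif unify A nat then fail else clear H | nat => fail | _ => clear H end end; lia.

Section Bounds.
Variable R : rcfType.
Variables (w : nat -> R[i]) (d : nat) (K Mb : R) (isI : nat -> bool).
Hypothesis hK : 1 <= K.
Hypothesis hd : (1 <= d)%N.
Hypothesis hw0 : forall l, (1 <= l)%N -> (l <= d)%N -> 0 < cmod (w l).
Hypothesis hsort : forall l l', (1 <= l)%N -> (l <= l')%N -> (l' <= d)%N -> cmod (w l) <= cmod (w l').
Hypothesis hI0 : isI 0.
Hypothesis hId : isI d.
Hypothesis hIle : forall x, isI x -> (x <= d)%N.
Hypothesis hgap : forall l, (1 <= l)%N -> (l < d)%N -> isI l -> K * cmod (w l) <= cmod (w l.+1).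
Hypothesis heq : forall l, (1 <= l)%N -> (l < d)%N -> ~~ isI l -> cmod (w l) = cmod (w l.+1).

Definition succ i1 i2 := [/\ isI i1, isI i2, (i1 < i2)%N & forall l, (i1 < l < i2)%N -> ~~ isI l].

Lemma find_block t : (1 <= t)%N -> (t <= d)%N ->
  exists i' k', [/\ succ i' k', (i' < t)%N & (t <= k')%N].
Proof.
move=> t1 td.
have exP : exists x, isI x && (x < t)%N by exists 0%N; rewrite hI0.
have ubP : forall x, isI x && (x < t)%N -> (x <= t)%N by move=> x /andP[_ /ltnW].
have exQ : exists x, isI x && (t <= x)%N by exists d; rewrite hId td.
case: (ex_maxnP exP ubP) => i' /andP[Ii' it] imax.
case: (ex_minnP exQ) => k' /andP[Ik' tk] kmin.
exists i', k'; split => //; split => //; first by lia.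
move=> l /andP[il lk]; apply/negP => Il.
case: (ltnP l t) => lt.
  by have := imax l; rewrite Il lt => /(_ isT); lia.
by have := kmin l; rewrite Il lt => /(_ isT); lia.
Qed.

Lemma block_eq i' k' : succ i' k' ->
  forall l, (i' < l)%N -> (l <= k')%N -> cmod (w l) = cmod (w k').
Proof.
case=> Ii Ik ik hb; have kd := hIle Ik.
move=> l il lk; move: {2}(k' - l)%N (erefl (k' - l)%N) => n.
elim: n l il lk => [|n IH] l il lk e.
  by have -> : l = k' by lia.
rewrite heq; first (apply: IH; lia); try lia.
by apply: hb; apply/andP; split; lia.
Qed.

Definition PP a b := \prod_(a <= l < b) cmod (w l).

Lemma PP_const a b mu : (forall l, (a <= l)%N -> (l < b)%N -> cmod (w l) = mu) ->
  (a <= b)%N -> PP a b = mu ^+ (b - a).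
Proof.
move=> h ab; rewrite /PP (eq_big_nat _ _ (F2 := fun _ => mu)).
  by rewrite prodr_const_nat.
by move=> l /andP[]; apply: h.
Qed.

Lemma PP_split a b c : (a <= b)%N -> (b <= c)%N -> PP a c = PP a b * PP b c.
Proof. by move=> ab bc; rewrite /PP -big_cat_nat. Qed.

Lemma PP_ge0 a b : 0 <= PP a b.
Proof. by apply: prodr_ge0 => l _; apply: cmod_ge0. Qed.

Notation PX a b := (\prod_(a <= l < b) ('X - (w l)%:P)).

Lemma boundA t : (t <= d)%N -> isI t ->
  (1 - (2 ^ d)%:R / K) * PP t.+1 d.+1 <= cmod ((PX 1 d.+1)`_t).
Proof.
move=> td It.
suff key : forall M V, 0 <= M -> 0 < V -> M * K <= V ->
    (forall l, (1 <= l < 1 + t)%N -> cmod (w l) <= M) ->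
    (forall l, (1 + t <= l < 1 + t + (d - t))%N -> V <= cmod (w l)) ->
    (1 - (2 ^ d)%:R / K) * PP t.+1 d.+1 <= cmod ((PX 1 d.+1)`_t).
  have K0 : 0 < K by apply: lt_le_trans hK.
  case: (posnP t) => [t0|tpos].
    subst t; have w1 := hw0 (leqnn 1) hd.
    apply: (key (cmod (w 1) / K) (cmod (w 1))).
    - by apply: divr_ge0; [apply: ltW | apply: ltW].
    - done.
    - by rewrite divfK // gt_eqF.
    - by move=> l; lia.
    - move=> l /andP[l1 l2]; apply: hsort; lia.
  case: (ltnP t d) => tlt.
    apply: (key (cmod (w t)) (cmod (w t.+1))).
    - exact: cmod_ge0.
    - by apply: hw0; lia.
    - by rewrite mulrC; apply: hgap.
    - move=> l /andP[l1 l2]; apply: hsort; lia.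
    - move=> l /andP[l1 l2]; apply: hsort; lia.
  have tdd : t = d by lia.
  subst t; have wd := hw0 hd (leqnn d).
  apply: (key (cmod (w d)) (cmod (w d) * K)).
  - exact: cmod_ge0.
  - by apply: mulr_gt0.
  - done.
  - move=> l /andP[l1 l2]; apply: hsort; lia.
  - move=> l; lia.
move=> M V M0 V0 MKV hp hq.
have := levelA M0 V0 hK MKV hp hq.
have e1 : (1 + t + (d - t) = d.+1)%N by lia.
have e2 : (t + (d - t) = d)%N by lia.
have s1 : (1 <= 1 + t)%N by lia.
have s2 : (1 + t <= d.+1)%N by lia.
rewrite e1 e2 -(PX_split w s1 s2) PX_coef0.
by rewrite add1n.
Qed.

Hypothesis hMb : forall i1 i2, succ i1 i2 -> (2 ^ (i2 - i1))%:R <= Mb.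
Hypothesis hMb1 : 1 <= Mb.
Hypothesis hdel : (2 ^ d)%:R / K < 1.

Lemma boundB t : (t <= d)%N ->
  cmod ((PX 1 d.+1)`_t) <= (Mb + (2 ^ d)%:R / K) * PP t.+1 d.+1.
Proof.
move=> td.
have K0 : 0 < K by apply: lt_le_trans hK.
have del0 : 0 <= (2 ^ d)%:R / K by apply: divr_ge0; [apply: ler0n | apply: ltW].
case: (posnP t) => [t0|tpos].
  subst t; rewrite PX_coef0 -/(PP 1 d.+1); apply: ler_peMl; first exact: PP_ge0.
  by apply: le_trans hMb1 _; rewrite lerDl.
have [i' [k' [hs it tk]]] := find_block tpos td.
have hb := block_eq hs.
case: hs => Ii Ik ik hnb; have kd := hIle Ik.
have hs : succ i' k' by [].
have [mu mudef] : exists mu, mu = cmod (w k') by eexists.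
have mu0 : 0 < mu by rewrite mudef; apply: hw0; nlia.
have M0 : 0 <= mu / K by apply: divr_ge0; apply: ltW.
have MKV : mu / K * K <= mu.
  rewrite divfK; first exact: lexx.
  by rewrite gt_eqF.
have hp : forall l, (1 <= l < 1 + i')%N -> cmod (w l) <= mu / K.
  move=> l /andP[l1 l2]; rewrite ler_pdivlMr; last exact: K0.
  rewrite mulrC.
  have i1 : (1 <= i')%N by nlia.
  apply: (@le_trans _ _ (K * cmod (w i'))).
    rewrite (ler_pM2l K0).
    have li : (l <= i')%N by nlia.
    have idd : (i' <= d)%N by nlia.
    exact: hsort l1 li idd.
  rewrite mudef -(hb i'.+1 (ltnSn i') ik).
  apply: hgap; [nlia | nlia | exact: Ii].
have hq : forall l, (1 + i' <= l < 1 + i' + (d - i'))%N -> mu <= cmod (w l).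
  move=> l /andP[l1 l2]; rewrite mudef -(hb i'.+1 (ltnSn i') ik).
  apply: hsort; nlia.
have L1 := @levelB1 R w 1 i' (d - i') (mu / K) mu K M0 mu0 hK MKV hp hq t (ltnW it).
have e1 : (1 + i' + (d - i') = d.+1)%N by nlia.
have e2 : (i' + (d - i') = d)%N by nlia.
have s1 : (1 <= 1 + i')%N by nlia.
have s2 : (1 + i' <= d.+1)%N by nlia.
rewrite e1 e2 -(PX_split w s1 s2) PX_coef0 in L1.
have M0' : 0 <= mu by apply: ltW.
have V0' : 0 < mu * K by apply: mulr_gt0.
have MKV' : mu * K <= mu * K by [].
have hp' : forall l, (1 + i' <= l < 1 + i' + (k' - i'))%N -> cmod (w l) <= mu.
  move=> l /andP[l1 l2]; rewrite mudef (hb l); [exact: lexx | nlia | nlia].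
have hq' : forall l, (1 + i' + (k' - i') <= l < 1 + i' + (k' - i') + (d - k'))%N -> mu * K <= cmod (w l).
  move=> l /andP[l1 l2].
  have k1 : (1 <= k')%N by nlia.
  apply: (@le_trans _ _ (cmod (w k'.+1))); last by apply: hsort; nlia.
  rewrite mudef mulrC; apply: hgap; [nlia | nlia | exact: Ik].
have ti : (t - i' <= k' - i')%N by nlia.
have L2 := @levelB2 R w (1 + i') (k' - i') (d - k') mu (mu * K) K M0' V0' hK MKV' hp' hq' (t - i') ti.
have e3 : (1 + i' + (k' - i') = 1 + k')%N by nlia.
have e4 : (1 + k' + (d - k') = d.+1)%N by nlia.
have e5 : (k' - i' + (d - k') = d - i')%N by nlia.
have e6 : (k' - i' - (t - i') = k' - t)%N by nlia.
have s3 : (1 + i' <= 1 + k')%N by nlia.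
have s4 : (1 + k' <= d.+1)%N by nlia.
rewrite e3 e4 e5 e6 -(PX_split w s3 s4) PX_coef0 in L2.
rewrite -/(PP (1 + i') d.+1) in L1; rewrite -/(PP (1 + k') d.+1) in L2.
set Q := PP (1 + k') d.+1 in L2.
have hQ : 0 <= Q by apply: PP_ge0.
have P1 : PP (1 + i') d.+1 = mu ^+ (k' - i') * Q.
  have c1 : PP (1 + i') (1 + k') = mu ^+ (k' - i').
    rewrite (PP_const (a := 1 + i') (b := 1 + k') (mu := mu)).
    - by congr (_ ^+ _); nlia.
    - by move=> l l1 l2; rewrite mudef; apply: hb; nlia.
    - exact: s3.
  by rewrite (PP_split s3 s4) c1.
have s5 : (t.+1 <= 1 + k')%N by nlia.
have P2 : PP t.+1 d.+1 = mu ^+ (k' - t) * Q.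
  have c2 : PP t.+1 (1 + k') = mu ^+ (k' - t).
    rewrite (PP_const (a := t.+1) (b := 1 + k') (mu := mu)).
    - by congr (_ ^+ _); nlia.
    - by move=> l l1 l2; rewrite mudef; apply: hb; nlia.
    - exact: s5.
  by rewrite (PP_split s5 s4) c2.
rewrite P1 in L1; rewrite P2.
set X := mu ^+ (k' - t) * Q.
have hX : 0 <= X by apply: mulr_ge0; [apply: exprn_ge0; apply: ltW | exact: hQ].
have e7 : mu ^+ (k' - i') * Q / (K * mu ^+ (t - i')) = X / K.
  rewrite /X (_ : (k' - i' = (k' - t) + (t - i'))%N); last by nlia.
  rewrite exprD invfM [K^-1 * _]mulrC; have mp : mu ^+ (t - i') != 0 by rewrite expf_neq0 // gt_eqF.
  by rewrite -!mulrA; congr (_ * _); rewrite mulrCA !mulrA mulfK.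
rewrite e7 in L1.
have e8 : mu ^+ (k' - t) * Q / K = X / K by [].
rewrite -/X in L2.
apply: le_trans L1 _.
apply: le_trans (lerD L2 (lexx _)) _.
(* numeric: C X + 2^(d-i') X/K + 2^d X/K <= (Mb + 2^d/K) X *)
have hC : ('C(k' - i', t - i'))%:R <= Mb - 1.
  have kpos : (0 < k' - i')%N by nlia.
  have hc := @bin_lt2 (k' - i') (t - i') kpos.
  rewrite lerBrDr; apply: le_trans (hMb hs).
  have p2 : (0 < 2 ^ (k' - i'))%N by rewrite expn_gt0.
  rewrite natr1 ler_nat; nlia.
have hA : (2 ^ (d - i'))%:R / K <= 1.
  apply: le_trans (ltW hdel); apply: ler_wpM2r; first by rewrite invr_ge0 ltW.
  by rewrite ler_nat leq_pexp2l // leq_subr.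
have -> : ('C(k' - i', t - i'))%:R * mu ^+ (k' - t) * Q = ('C(k' - i', t - i'))%:R * X by rewrite /X mulrA.
have -> : (2 ^ (d - i'))%:R * (X / K) = ((2 ^ (d - i'))%:R / K) * X by rewrite mulrA mulrAC.
have -> : (2 ^ d)%:R * (X / K) = ((2 ^ d)%:R / K) * X by rewrite mulrA mulrAC.
rewrite -!mulrDl; apply: ler_wpM2r; first exact: hX.
rewrite lerD2r; apply: le_trans (lerD hC hA) _.
by rewrite subrK.
Qed.

End Bounds.


Section Core.
Variable R : realType.

Lemma div_upper (x n mu e : R) : 1 <= n -> 0 <= e -> x <= n * mu + e -> x / n <= mu + e.
Proof.
move=> n1 e0 h; have n0 : 0 < n by apply: lt_le_trans n1.
rewrite ler_pdivrMr //; apply: le_trans h _; rewrite mulrDl [mu * n]mulrC lerD2l.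
by rewrite -[X in X <= _]mulr1 ler_wpM2l.
Qed.

Lemma div_lower (x n mu e : R) : 1 <= n -> 0 <= e -> n * mu - e <= x -> mu - e <= x / n.
Proof.
move=> n1 e0 h; have n0 : 0 < n by apply: lt_le_trans n1.
rewrite ler_pdivlMr //; apply: le_trans h; rewrite mulrBl [mu * n]mulrC lerD2l lerN2.
by rewrite -[X in X <= _]mulr1 ler_wpM2l.
Qed.

Lemma core1 (xi xj xk li lj lk mu lr al be E n1 n2 : R) :
  1 <= n1 -> 1 <= n2 -> 0 <= al -> 0 <= be ->
  lj - li = n1 * mu -> n2 * (lr + mu) <= lk - lj ->
  li - al <= xi -> xj <= lj + be -> lk - al <= xk ->
  2 * al + 4 * be < E -> E < lr / 2 ->
  (xj - xi) / n1 < (xk - xj) / n2 - E.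
Proof.
move=> n11 n21 al0 be0 e1 e2 h1 h2 h3 hE1 hE2.
have u : (xj - xi) / n1 <= mu + (al + be).
  apply: div_upper => //; first by apply: addr_ge0.
  by rewrite -e1; lra.
have v : (lr + mu) - (al + be) <= (xk - xj) / n2.
  apply: div_lower => //; first by apply: addr_ge0.
  lra.
lra.
Qed.

Lemma core2 (xi xj xk li lj lk mu al be E n1 n2 : R) :
  1 <= n1 -> 1 <= n2 -> 0 <= al -> 0 <= be ->
  lj - li = n1 * mu -> lk - lj = n2 * mu ->
  xi <= li + be -> lj - al <= xj -> xk <= lk + be ->
  2 * al + 4 * be < E ->
  (xk - xj) / n2 - E < (xj - xi) / n1.
Proof.
move=> n11 n21 al0 be0 e1 e2 h1 h2 h3 hE1.
have u : (xk - xj) / n2 <= mu + (al + be).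
  apply: div_upper => //; first by apply: addr_ge0.
  by rewrite -e2; lra.
have v : mu - (al + be) <= (xj - xi) / n1.
  apply: div_lower => //; first by apply: addr_ge0.
  by rewrite -e1; lra.
lra.
Qed.

Lemma slope_fin (r : nat -> \bar R) a b (xa xb : R) :
  r a = xa%:E -> r b = xb%:E -> slopeS r a b = ((xb - xa) / (b - a)%:R)%:E.
Proof. by move=> ra rb; rewrite /slopeS ra rb. Qed.

Lemma slope_inf_r (r : nat -> \bar R) a b (xa : R) : (a < b)%N ->
  r a = xa%:E -> r b = +oo%E -> slopeS r a b = +oo%E.
Proof.
move=> ab ra rb; rewrite /slopeS ra rb addye // gt0_mulye // lte_fin invr_gt0 ltr0n.
by rewrite subn_gt0.
Qed.

Lemma slope_inf_l (r : nat -> \bar R) a b (xb : R) : (a < b)%N ->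
  r a = +oo%E -> r b = xb%:E -> slopeS r a b = -oo%E.
Proof.
move=> ab ra rb; rewrite /slopeS ra rb /= addeNy // gt0_mulNye // lte_fin invr_gt0 ltr0n.
by rewrite subn_gt0.
Qed.

Lemma claim_inf1 (x E : R) : (x%:E < +oo - E%:E)%E.
Proof. by rewrite addye // ltry. Qed.

Lemma claim_inf2 (E : R) : (-oo - E%:E < +oo)%E.
Proof. by rewrite addNye // ltNye. Qed.

End Core.

Theorem mainTheorem5 (R : realType) (f : {poly R[i]}) (d : nat)
  (z : nat -> R[i]) (rho : R) (N : nat) (m E : R) (i j k : nat) :
  (size f).-1 = d ->
  f.[0] != 0 ->
  f = lead_coef f *: \prod_(1 <= l < d.+1) ('X - (z l)%:P) ->
  (forall l, (1 <= l)%N -> (l < d)%N -> cmod (z l) <= cmod (z l.+1)) ->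
  (exists l, [/\ (1 <= l)%N, (l < d)%N & cmod (z l) < cmod (z l.+1)]) ->
  (* rho = min { |z_{l+1}|/|z_l| : |z_{l+1}| > |z_l| } *)
  (exists l, [/\ (1 <= l)%N, (l < d)%N, cmod (z l) < cmod (z l.+1)
                & rho = cmod (z l.+1) / cmod (z l)]) ->
  (forall l, (1 <= l)%N -> (l < d)%N -> cmod (z l) < cmod (z l.+1) ->
     rho <= cmod (z l.+1) / cmod (z l)) ->
  let Rr := rho ^+ (2 ^ N) in
  let g := iter N graeffe f in
  let r := rcoef N g in
  (* (a) *)
  (forall i1 i2, successive d z i1 i2 -> (i2 - i1)%:R <= m) ->
  (* (b), including the implicit requirement 2^d R^{-1} < 1 *)
  2 ^+ d / Rr < 1 ->
  2 ^- N * 2 * ln (2 `^ m + 2 ^+ d / Rr) - 2 ^- N * 4 * ln (1 - 2 ^+ d / Rr) < E ->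
  E < ln rho / 2 ->
  (* (c) *)
  (i < j < k)%N -> (k <= d)%N ->
  (successive d z i j -> (forall l, (j < l < k)%N -> ~~ inI d z l) ->
     (slopeS r i j < slopeS r j k - E%:E)%E) /\
  (successive d z i k -> (slopeS r i j > slopeS r j k - E%:E)%E).
Proof.
move=> hsz hf0 hfac hsort hex hrex hrmin Rr g r ha hdel hE1 hE2 /andP[ij jk] kd.
set c := lead_coef f.
have f0 : f != 0 by apply: contraNneq hf0 => ->; rewrite horner0.
have c0 : c != 0 by rewrite lead_coef_eq0.
have d1 : (1 <= d)%N by case: hex => l [? ? _]; nlia.
have zne : forall l, (1 <= l)%N -> (l <= d)%N -> z l != 0.
  move=> l l1 ld.
  have := hf0; rewrite {1}hfac hornerZ horner_prod mulf_eq0 negb_or => /andP[_].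
  rewrite prodf_seq_neq0 => /allP /(_ l); rewrite mem_index_iota => /(_ (ltac:(nlia))).
  by rewrite hornerXsubC sub0r oppr_eq0.
have zpos : forall l, (1 <= l)%N -> (l <= d)%N -> 0 < cmod (z l).
  by move=> l l1 ld; rewrite cmod_gt0; apply: zne.
have rho1 : 1 < rho.
  case: hrex => l [l1 ld hlt ->].
  by rewrite ltr_pdivlMr ?mul1r //; apply: zpos; nlia.
have rho0 : 0 < rho by apply: lt_trans rho1.
pose w : nat -> R[i] := fun l => z l ^+ (2 ^ N).
set C := c ^+ (2 ^ N).
have hfac' : f = c *: \prod_(1 <= l < d.+1) ('X - (z l)%:P) by rewrite {1}hfac.
have gE : g = C *: \prod_(1 <= l < d.+1) ('X - (w l)%:P).
  by rewrite /g {1}hfac' iter_graeffe.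
have cw : forall l, cmod (w l) = cmod (z l) ^+ (2 ^ N) by move=> l; rewrite cmodX.
have hsortz : forall l l', (1 <= l)%N -> (l <= l')%N -> (l' <= d)%N -> cmod (z l) <= cmod (z l').
  move=> l l' l1; elim: l' => [|l' IH] hll hld; first by nlia.
  case: (ltngtP l l'.+1) => h; [|by nlia|by rewrite h].
  apply: le_trans (IH (ltac:(nlia)) (ltac:(nlia))) _; apply: hsort; nlia.
have hsortw : forall l l', (1 <= l)%N -> (l <= l')%N -> (l' <= d)%N -> cmod (w l) <= cmod (w l').
  move=> l l' l1 ll ld; rewrite !cw; apply: lerXn2r; rewrite ?qualifE /= ?cmod_ge0 //.
  exact: hsortz.
have hIle : forall x, inI d z x -> (x <= d)%N.
  move=> x; rewrite /inI => /or3P[/eqP->|/eqP->|/andP[_ /andP[h _]]] //; nlia.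
have hI0 : inI d z 0 by rewrite /inI eqxx.
have hId : inI d z d by rewrite /inI eqxx orbT.
have heqz : forall l, (1 <= l)%N -> (l < d)%N -> ~~ inI d z l -> cmod (z l) = cmod (z l.+1).
  move=> l l1 ld hn; apply/le_anti; rewrite (hsort l l1 ld) /= leNgt.
  apply: contra hn => hlt; rewrite /inI; apply/or3P; apply: Or33.
  by rewrite hlt andbT; apply/andP; split; nlia.
have hgapz : forall l, (1 <= l)%N -> (l < d)%N -> inI d z l -> rho * cmod (z l) <= cmod (z l.+1).
  move=> l l1 ld; rewrite /inI => /or3P[/eqP h|/eqP h|/andP[_ /andP[_ h]]]; [nlia|nlia|].
  rewrite -ler_pdivlMr; last by apply: zpos; nlia.
  exact: hrmin l l1 ld h.
have heqw : forall l, (1 <= l)%N -> (l < d)%N -> ~~ inI d z l -> cmod (w l) = cmod (w l.+1).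
  by move=> l l1 ld h; rewrite !cw heqz.
have hgapw : forall l, (1 <= l)%N -> (l < d)%N -> inI d z l -> Rr * cmod (w l) <= cmod (w l.+1).
  move=> l l1 ld h; rewrite !cw /Rr -exprMn; apply: lerXn2r; rewrite ?qualifE /= ?cmod_ge0 //.
    by apply: mulr_ge0; [apply: ltW | apply: cmod_ge0].
  exact: hgapz.
have hK : 1 <= Rr by apply: exprn_ege1; apply: ltW.
have hw0 : forall l, (1 <= l)%N -> (l <= d)%N -> 0 < cmod (w l).
  by move=> l l1 ld; rewrite cw exprn_gt0 ?zpos.
have [i1 [i2 [hs12 _ _]]] := find_block hK d1 hI0 hId (leqnn 1) d1.
have m1 : 1 <= m.
  have := ha i1 i2 hs12; case: hs12 => _ _ h12 _ hm.
  apply: le_trans hm; rewrite ler1n; nlia.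
have hMb : forall i1 i2, succ (inI d z) i1 i2 -> (2 ^ (i2 - i1))%:R <= 2 `^ m.
  move=> a b hs; have hm := ha a b hs.
  rewrite natrX -powR_mulrn; last exact: ler0n.
  have h2 : (1 : R) <= 2 by rewrite ler1n.
  exact: (ler_powR h2 hm).
have hMb1 : 1 <= 2 `^ m.
  have h2 : (1 : R) <= 2 by rewrite ler1n.
  have := ler_powR h2 (le_trans ler01 m1).
  by rewrite powRr0.
have hdel' : (2 ^ d)%:R / Rr < 1 by rewrite natrX.
have bA := fun t td It => boundA hK d1 hw0 hsortw hI0 hId hgapw (t := t) td It.
have bB := fun t td => boundB hK d1 hw0 hsortw hI0 hId hIle hgapw heqw hMb hMb1 hdel' (t := t) td.
have Cpos : 0 < cmod C by rewrite cmod_gt0 expf_neq0.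
have gcoef : forall t, cmod (g`_t) = cmod C * cmod ((\prod_(1 <= l < d.+1) ('X - (w l)%:P))`_t).
  by move=> t; rewrite gE coefZ cmodM.
set del := 2 ^+ d / Rr.
have hdel2 : (2 ^ d)%:R / Rr = del by rewrite natrX.
have Rr0 : 0 < Rr by apply: lt_le_trans hK.
have del0 : 0 <= del by apply: divr_ge0; [apply: exprn_ge0; apply: ler0n | apply: ltW].
have Ptpos : forall t, (t <= d)%N -> 0 < PP w t.+1 d.+1.
  move=> t td; rewrite /PP big_nat_cond; apply: prodr_gt0 => l /andP[/andP[l1 l2] _].
  by apply: hw0; nlia.
have gB : forall t, (t <= d)%N -> cmod (g`_t) <= (2 `^ m + del) * (cmod C * PP w t.+1 d.+1).
  move=> t td; rewrite gcoef -hdel2 mulrCA; apply: ler_wpM2l; first exact: ltW Cpos.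
  exact: bB.
have gA : forall t, (t <= d)%N -> inI d z t -> (1 - del) * (cmod C * PP w t.+1 d.+1) <= cmod (g`_t).
  move=> t td It; rewrite gcoef -hdel2 mulrCA; apply: ler_wpM2l; first exact: ltW Cpos.
  exact: bA.
have del1 : 0 < 1 - del by rewrite subr_gt0.
have gnz : forall t, (t <= d)%N -> inI d z t -> g`_t != 0.
  move=> t td It; rewrite -cmod_gt0; apply: lt_le_trans (gA t td It).
  by apply: mulr_gt0 => //; apply: mulr_gt0 => //; apply: Ptpos.
set a : R := 2 ^- N.
have apos : 0 < a by rewrite invr_gt0 exprn_gt0.
pose x t := - a * ln (cmod (g`_t)).
pose lam t := - a * ln (cmod C * PP w t.+1 d.+1).
set al := a * ln (2 `^ m + del).
set be := - (a * ln (1 - del)).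
have rfin : forall t, g`_t != 0 -> r t = (x t)%:E.
  by move=> t h; rewrite /r /rcoef (negbTE h).
have APpos : forall t, (t <= d)%N -> 0 < cmod C * PP w t.+1 d.+1.
  by move=> t td; apply: mulr_gt0 => //; apply: Ptpos.
have Mbd : 0 < 2 `^ m + del.
  have h0 := lt_le_trans ltr01 hMb1; lra.
have xlow : forall t, (t <= d)%N -> g`_t != 0 -> lam t - al <= x t.
  move=> t td gt; have G0 : 0 < cmod (g`_t) by rewrite cmod_gt0.
  have hl : ln (cmod (g`_t)) <= ln (2 `^ m + del) + ln (cmod C * PP w t.+1 d.+1).
    rewrite -lnM ?posrE //; last exact: APpos.
    rewrite ler_ln ?posrE //; first exact: gB.
    by apply: mulr_gt0 => //; apply: APpos.
  have := ler_wpM2l (ltW apos) hl; rewrite mulrDr /x /lam /al => h; lra.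
have xhigh : forall t, (t <= d)%N -> inI d z t -> x t <= lam t + be.
  move=> t td It; have G0 : 0 < cmod (g`_t) by rewrite cmod_gt0; apply: gnz.
  have hl : ln (1 - del) + ln (cmod C * PP w t.+1 d.+1) <= ln (cmod (g`_t)).
    rewrite -lnM ?posrE //; last exact: APpos.
    rewrite ler_ln ?posrE //; first exact: gA.
    by apply: mulr_gt0 => //; apply: APpos.
  have := ler_wpM2l (ltW apos) hl; rewrite mulrDr /x /lam /be => h; lra.
have aN : a * 2 ^+ N = 1 by rewrite /a mulVf // expf_neq0 // pnatr_eq0.
have lamdiff : forall p q, (p <= q)%N -> (q <= d)%N -> lam q - lam p = ln (PP z p.+1 q.+1).
  move=> p q pq qd.
  have s1 : (p.+1 <= q.+1)%N by nlia.
  have s2 : (q.+1 <= d.+1)%N by nlia.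
  have W : PP w p.+1 q.+1 = PP z p.+1 q.+1 ^+ (2 ^ N).
    by rewrite /PP -prodrXl; apply: eq_bigr => l _; exact: cw.
  have Zpos : 0 < PP z p.+1 q.+1.
    rewrite /PP big_nat_cond; apply: prodr_gt0 => l /andP[/andP[l1 l2] _].
    by apply: zpos; nlia.
  have hx : PP z p.+1 q.+1 ^+ (2 ^ N) \is Num.pos by rewrite posrE; exact: exprn_gt0.
  have hy : cmod C * PP w q.+1 d.+1 \is Num.pos by rewrite posrE; exact: APpos.
  rewrite /lam (PP_split w s1 s2) W [cmod C * (_ * _)]mulrCA (lnM hx hy).
  rewrite lnXn // -mulr_natr natrX.
  set L := ln (cmod C * PP w q.+1 d.+1); set Y := ln (PP z p.+1 q.+1).
  transitivity (Y * (a * 2 ^+ N)); first by ring.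
  by rewrite aN mulr1.
have hKr : 1 <= rho by apply: ltW.
have blockz := fun i0 k0 (hs : succ (inI d z) i0 k0) => block_eq hKr d1 hI0 hId hIle heqz hs.
have lnpow : forall (y : R) n, 0 < y -> ln (y ^+ n) = n%:R * ln y.
  by move=> y n y0; rewrite lnXn // mulr_natl.
have al0 : 0 <= al.
  apply: mulr_ge0; first exact: ltW.
  apply: ln_ge0; apply: le_trans hMb1 _; rewrite lerDl; exact: del0.
have be0 : 0 <= be.
  rewrite /be oppr_ge0; apply: mulr_ge0_le0; first exact: ltW.
  by apply: ln_le0; rewrite lerBlDr lerDl.
have hE1' : 2 * al + 4 * be < E.
  have e : 2 * al + 4 * be = 2 ^- N * 2 * ln (2 `^ m + 2 ^+ d / Rr) - 2 ^- N * 4 * ln (1 - 2 ^+ d / Rr).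
    by rewrite /al /be /a /del; ring.
  by rewrite e.
have id : (i <= d)%N by nlia.
have jd : (j <= d)%N by nlia.
split.
- move=> hs _.
  have hs' : succ (inI d z) i j := hs.
  case: hs => Ii Ij _ _.
  have blk := blockz i j hs'.
  have [mu mudef] : exists mu, mu = cmod (z j) by eexists.
  have mupos : 0 < mu by rewrite mudef; apply: zpos; nlia.
  have Zij : PP z i.+1 j.+1 = mu ^+ (j - i).
    rewrite (PP_const (a := i.+1) (b := j.+1) (mu := mu)).
    + by congr (_ ^+ _); nlia.
    + by move=> l l1 l2; rewrite mudef; apply: blk; nlia.
    + nlia.
  have Zjk : (rho * mu) ^+ (k - j) <= PP z j.+1 k.+1.
    rewrite -(subSS j k) -prodr_const_nat /PP big_nat_cond [X in _ <= X]big_nat_cond.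
    apply: ler_prod => l /andP[/andP[l1 l2] _]; apply/andP; split.
      by apply: mulr_ge0; apply: ltW.
    apply: (@le_trans _ _ (cmod (z j.+1))).
      rewrite mudef; apply: hgapz => //; nlia.
    apply: hsortz; nlia.
  have gi := gnz i id Ii; have gj := gnz j jd Ij.
  have e1 : lam j - lam i = (j - i)%:R * ln mu.
    by rewrite lamdiff ?Zij ?lnpow //; nlia.
  have e2 : (k - j)%:R * (ln rho + ln mu) <= lam k - lam j.
    rewrite lamdiff; last by nlia.
      rewrite -lnM ?posrE // -lnpow; last by apply: mulr_gt0.
      rewrite ler_ln ?posrE //; first by apply: exprn_gt0; apply: mulr_gt0.
      apply: lt_le_trans Zjk; apply: exprn_gt0; apply: mulr_gt0.
      by [].
      by [].
    nlia.
  case: (eqVneq (g`_k) 0) => gk.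
    have rk : r k = +oo%E by rewrite /r /rcoef gk eqxx.
    rewrite (slope_fin (rfin i gi) (rfin j gj)) (slope_inf_r jk (rfin j gj) rk).
    exact: claim_inf1.
  rewrite (slope_fin (rfin i gi) (rfin j gj)) (slope_fin (rfin j gj) (rfin k gk)).
  rewrite -EFinB lte_fin.
  apply: (core1 (mu := ln mu) (lr := ln rho) (li := lam i) (lj := lam j) (lk := lam k)
            (al := al) (be := be)) => //.
  + by rewrite ler1n; nlia.
  + by rewrite ler1n; nlia.
  + exact: xlow.
  + exact: xhigh.
  + exact: xlow.
- move=> hs.
  have hs' : succ (inI d z) i k := hs.
  case: hs => Ii Ik _ _.
  have blk := blockz i k hs'.
  have [mu mudef] : exists mu, mu = cmod (z k) by eexists.
  have mupos : 0 < mu by rewrite mudef; apply: zpos; nlia.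
  have Zij : PP z i.+1 j.+1 = mu ^+ (j - i).
    rewrite (PP_const (a := i.+1) (b := j.+1) (mu := mu)).
    + by congr (_ ^+ _); nlia.
    + by move=> l l1 l2; rewrite mudef; apply: blk; nlia.
    + nlia.
  have Zjk : PP z j.+1 k.+1 = mu ^+ (k - j).
    rewrite (PP_const (a := j.+1) (b := k.+1) (mu := mu)).
    + by congr (_ ^+ _); nlia.
    + by move=> l l1 l2; rewrite mudef; apply: blk; nlia.
    + nlia.
  have gi := gnz i id Ii; have gk := gnz k kd Ik.
  have e1 : lam j - lam i = (j - i)%:R * ln mu.
    by rewrite lamdiff ?Zij ?lnpow //; nlia.
  have e2 : lam k - lam j = (k - j)%:R * ln mu.
    by rewrite lamdiff ?Zjk ?lnpow //; nlia.
  case: (eqVneq (g`_j) 0) => gj.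
    have rj : r j = +oo%E by rewrite /r /rcoef gj eqxx.
    rewrite (slope_inf_r ij (rfin i gi) rj) (slope_inf_l jk rj (rfin k gk)).
    exact: claim_inf2.
  rewrite (slope_fin (rfin i gi) (rfin j gj)) (slope_fin (rfin j gj) (rfin k gk)).
  rewrite -EFinB lte_fin.
  apply: (core2 (mu := ln mu) (li := lam i) (lj := lam j) (lk := lam k)
            (al := al) (be := be)) => //.
  + by rewrite ler1n; nlia.
  + by rewrite ler1n; nlia.
  + exact: xhigh.
  + exact: xlow.
  + exact: xhigh.
Qed.
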